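(* Let $m,n\ge0$, let $x=(x_1,\dots,x_m)$, $y=(y_1,\dots,y_n)$, and let $H_k(x,y)$ be as in the context. Then: (1) $H_k(x,y)=\sum_{j=0}^n(-1)^je_j(y)H_k'(x)$ with $H'_k(x):=H_{k-j}(x)$, i.e. $H_k(x,y)=\sum_{j=0}^n(-1)^je_j(y)H_{k-j}(x)$ for all $k\in\mathbb Z$, where $H_{k}(x)$ is the element for $n=0$ and $e_j(y)$ is the $j$-th elementary symmetric polynomial in $y$; (2) for all $k\in\mathbb Z$, $H_k(x,y)\Delta_m(x)\Delta_n(y)=\sum_{(\sigma,\tau)\in S_m\times S_n}\mathrm{sgn}(\sigma)\mathrm{sgn}(\tau)(\sigma,\tau)\Big(\prod_{j=1}^n\big(1-\tfrac{y_j}{x_1}\big)x_1^{k}x_1^{m-1}x_2^{m-2}\cdots x_m^0\,y_1^{n-1}\cdots y_n^0\Big)$, where $S_m$ permutes the $x$'s and $S_n$ the $y$'s; (3) for $m\ge1$ and all $k\in\mathbb Z$, $H_k(x,y)-x_1H_{k-1}(x,y)=H_k(x_2,\dots,x_m,y)$; (4) if $m=1$, then $H_k(x_1,y)-x_1H_{k-1}(x_1,y)=0$ for all $k\in\mathbb Z$; (5) for every sequence of integers $\lambda_1,\dots,\lambda_m$, $\det\big(H_{\lambda_i-i+j}(x,y)\big)_{1\le i,j\le m}=\prod_{i=1}^m\prod_{j=1}^n\big(1-\tfrac{y_j}{x_i}\big)E_\lambda(x_1,\dots,x_m)$; (6) for every sequence of integers $\lambda_1,\dots,\lambda_{m+1}$,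 $\det\big(H_{\lambda_i-i+j}(x,y)\big)_{1\le i,j\le m+1}=0$.
   Context: Define $h_k=h_k(x,y)$ and $h_k^{(\infty)}$ by the expansions at $t=0$ and at $t=\infty$: $\frac{\prod_{j=1}^n(1-y_jt)}{\prod_{i=1}^m(1-x_it)}=\sum_{k\ge0}h_kt^k=\sum_{k\le n-m}h^{(\infty)}_kt^k$, with $h_k=0$ for $k<0$ and $h^{(\infty)}_k=0$ for $k>n-m$. Set $H_k(x,y)=h_k-h_k^{(\infty)}$ for $k\in\mathbb Z$. $\Delta_m(x)=\prod_{i<j}(x_i-x_j)$, $\Delta_n(y)=\prod_{i<j}(y_i-y_j)$. For integers $\lambda_1,\dots,\lambda_m$, $E_\lambda(x)$ is defined by $E_\lambda(x)\Delta_m(x)=\sum_{\sigma\in S_m}\mathrm{sgn}(\sigma)\sigma(x_1^{\lambda_1+m-1}\cdots x_m^{\lambda_m})$. *)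

(* Defs.v *)
From HB Require Import structures.
From mathcomp Require Import all_boot all_order all_algebra all_fingroup.
Set Implicit Arguments. Unset Strict Implicit. Unset Printing Implicit Defensive.
Import Order.TTheory GRing.Theory Num.Theory.
Local Open Scope ring_scope.

(* All objects are evaluated at points x : 'I_m -> F, y : 'I_n -> F of an
   arbitrary field F (x_i nonzero). Indices are 0-based:
   x_1 is x ord0, etc. *)
Section Defs.
Variable F : fieldType.

(* h_k : coefficient of t^k in the expansion at t = 0 of
   prod_j (1 - y_j t) / prod_i (1 - x_i t), i.e. of
   prod_j (1 - y_j t) * prod_i (sum_{l>=0} x_i^l t^l)
   (truncating the geometric series at degree k does not change the
   coefficient of t^k); h_k = 0 for k < 0. *)
Definition hzero (m n : nat) (x : 'I_m -> F) (y : 'I_n -> F) (k : int) : F :=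
  match k with
  | Posz k =>
      ((\prod_(j < n) (1 - (y j)%:P * 'X)) *
       (\prod_(i < m) (\sum_(l < k.+1) ((x i) ^+ l)%:P * 'X^l)))`_k
  | Negz _ => 0
  end.

(* h^(oo)_k : expansion at t = oo.  With t = 1/s,
   prod_j (1 - y_j t)/prod_i (1 - x_i t)
     = s^(m-n) * prod_j (s - y_j) / prod_i (s - x_i),
   and 1/(s - x_i) = - x_i^-1 * sum_{r>=0} x_i^-r s^r.  The coefficient of
   t^k = s^(-k) is the coefficient c_l of s^l, l = n - m - k, of
   prod_j (s - y_j) * prod_i (1/(s - x_i)) (zero unless k <= n - m). *)
Definition hinf (m n : nat) (x : 'I_m -> F) (y : 'I_n -> F) (k : int) : F :=
  if (k <= n%:Z - m%:Z)%R then
    let l := absz (n%:Z - m%:Z - k)%R in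
    ((\prod_(j < n) ('X - (y j)%:P)) *
     (\prod_(i < m) ((- (x i)^-1)%:P *
                     (\sum_(r < l.+1) ((x i) ^- r)%:P * 'X^r))))`_l
  else 0.

Definition Hk (m n : nat) (x : 'I_m -> F) (y : 'I_n -> F) (k : int) : F :=
  hzero x y k - hinf x y k.

Definition noy : 'I_0 -> F := fun _ => 0.

Definition elemsym (n : nat) (y : 'I_n -> F) (j : nat) : F :=
  \sum_(A : {set 'I_n} | #|A| == j) \prod_(i in A) y i.

Definition Delta (m : nat) (x : 'I_m -> F) : F :=
  \prod_(i < m) \prod_(j < m | (i < j)%N) (x i - x j).

Definition xtail (m : nat) : ('I_m -> F) -> 'I_m.-1 -> F :=
  match m return ('I_m -> F) -> 'I_m.-1 -> F with
  | 0 => fun x => x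
  | m'.+1 => fun x i => x (lift ord0 i)
  end.

Definition alt (m : nat) (lam : 'I_m -> int) (x : 'I_m -> F) : F :=
  \sum_(s : 'S_m) (-1) ^+ s *
     \prod_(i < m) (x (s i)) ^ (lam i + (m - 1 - i)%N%:Z).

Definition Elam (m : nat) (lam : 'I_m -> int) (x : 'I_m -> F) : F :=
  alt lam x / Delta x.

Definition term2 (m n : nat) (i0 : 'I_m) (k : int)
    (x : 'I_m -> F) (y : 'I_n -> F) : F :=
  ((\prod_(j < n) (1 - y j / x i0)) * ((x i0) ^ k)) *
  ((\prod_(i < m) (x i) ^+ (m - 1 - i)) * (\prod_(j < n) (y j) ^+ (n - 1 - j))).

End Defs.

(* Main.v *)
Require Import Defs.
From HB Require Import structures.
From mathcomp Require Import all_boot all_order all_algebra all_fingroup.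
From mathcomp Require Import zify ring lra.
Import Order.TTheory GRing.Theory Num.Theory.
Set Implicit Arguments. Unset Strict Implicit. Unset Printing Implicit Defensive.
Local Open Scope ring_scope.

Section Work.
Variable F : fieldType.

Definition Gp (a : F) (K : nat) : {poly F} := \sum_(l < K.+1) (a ^+ l)%:P * 'X^l.
Definition Gi (a : F) (L : nat) : {poly F} :=
  (- a^-1)%:P * \sum_(r < L.+1) (a ^- r)%:P * 'X^r.

Lemma coef_Gp a K i : (Gp a K)`_i = if (i <= K)%N then a ^+ i else 0.
Proof.
rewrite /Gp; under eq_bigr do rewrite mul_polyC.
by rewrite -poly_def coef_poly ltnS.
Qed.

Lemma coef_Gi a L i : (Gi a L)`_i = if (i <= L)%N then - a^-1 * a ^- i else 0.
Proof.
rewrite /Gi; under eq_bigr do rewrite mul_polyC.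
by rewrite -(poly_def _ (fun r => a ^- r)) coefCM coef_poly ltnS; case: ifP; rewrite ?mulr0.
Qed.

Definition eqt (K : nat) (p q : {poly F}) := forall i, (i <= K)%N -> p`_i = q`_i.

Lemma eqt_refl K p : eqt K p p. Proof. by []. Qed.
Lemma eqt_sym K p q : eqt K p q -> eqt K q p.
Proof. by move=> h i hi; rewrite h. Qed.
Lemma eqt_trans K p q r : eqt K p q -> eqt K q r -> eqt K p r.
Proof. by move=> h1 h2 i hi; rewrite h1 ?h2. Qed.
Lemma eqt_le K K' p q : (K <= K')%N -> eqt K' p q -> eqt K p q.
Proof. by move=> hK h i hi; apply: h; apply: leq_trans hK. Qed.

Lemma eqtM K p p' q q' : eqt K p p' -> eqt K q q' -> eqt K (p * q) (p' * q').
Proof.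
move=> h1 h2 i hi; rewrite !coefM; apply: eq_bigr => j _.
have hj : (j <= K)%N by apply: leq_trans hi; rewrite -ltnS.
rewrite h1 // h2 //; apply: leq_trans hi; exact: leq_subr.
Qed.

Lemma eqt_prod K n (P Q : 'I_n -> {poly F}) :
  (forall i, eqt K (P i) (Q i)) -> eqt K (\prod_i P i) (\prod_i Q i).
Proof.
move=> h; apply: (big_ind2 (eqt K)) => //.
by move=> ? ? ? ?; apply: eqtM.
Qed.

Lemma eqt_Gp K K' a : (K <= K')%N -> eqt K (Gp a K') (Gp a K).
Proof.
move=> hK i hi; rewrite !coef_Gp hi; suff -> : (i <= K')%N by [].
exact: leq_trans hK.
Qed.

Lemma eqt_Gi K K' a : (K <= K')%N -> eqt K (Gi a K') (Gi a K).
Proof.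
move=> hK i hi; rewrite !coef_Gi hi; suff -> : (i <= K')%N by [].
exact: leq_trans hK.
Qed.

Lemma coef_1mX (a : F) (q : {poly F}) k :
  ((1 - a%:P * 'X) * q)`_k = q`_k - a * (if k is k'.+1 then q`_k' else 0).
Proof.
rewrite mulrBl mul1r coefB -mulrA coefCM coefXM.
by case: k.
Qed.

Lemma coef_Xm (a : F) (q : {poly F}) L :
  (('X - a%:P) * q)`_L = (if L is L'.+1 then q`_L' else 0) - a * q`_L.
Proof.
rewrite mulrBl coefB coefCM coefXM.
by case: L.
Qed.

Lemma Gp_inv (a : F) K : eqt K ((1 - a%:P * 'X) * Gp a K) 1.
Proof.
move=> i hi; rewrite coef_1mX coef1 !coef_Gp hi.
case: i hi => [|i] hi /=; first by rewrite expr0 mulr0 subr0.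
rewrite coef_Gp (ltnW hi) exprS; ring.
Qed.

Lemma Gi_inv (a : F) L : a != 0 -> eqt L (('X - a%:P) * Gi a L) 1.
Proof.
move=> a0 i hi; rewrite coef_Xm coef1 !coef_Gi hi.
case: i hi => [|i] hi /=; first by rewrite expr0 invr1; field.
rewrite coef_Gi (ltnW hi) exprS invfM; field.
by rewrite expf_neq0.
Qed.


Definition hz m n (x : 'I_m -> F) (y : 'I_n -> F) (k : nat) : F :=
  ((\prod_(j < n) (1 - (y j)%:P * 'X)) * \prod_(i < m) Gp (x i) k)`_k.
Definition hi m n (x : 'I_m -> F) (y : 'I_n -> F) (L : nat) : F :=
  ((\prod_(j < n) ('X - (y j)%:P)) * \prod_(i < m) Gi (x i) L)`_L.
Definition ext (f : nat -> F) (k : int) : F :=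
  match k with Posz k => f k | Negz _ => 0 end.

Lemma hzeroE m n (x : 'I_m -> F) (y : 'I_n -> F) k : hzero x y k = ext (hz x y) k.
Proof. by case: k. Qed.

Lemma hinfE m n (x : 'I_m -> F) (y : 'I_n -> F) k :
  hinf x y k = ext (hi x y) (n%:Z - m%:Z - k).
Proof.
rewrite /hinf; case: ifP => h; case E: (n%:Z - m%:Z - k) => [l|l] //=; lia.
Qed.

Lemma HkE m n (x : 'I_m -> F) (y : 'I_n -> F) k :
  Hk x y k = ext (hz x y) k - ext (hi x y) (n%:Z - m%:Z - k).
Proof. by rewrite /Hk hzeroE hinfE. Qed.

Lemma ext_rec0 (f g : nat -> F) a :
  (forall k, f k - a * (if k is k'.+1 then f k' else 0) = g k) ->
  forall K : int, ext f K - a * ext f (K - 1) = ext g K.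
Proof.
move=> h [[|k]|k].
- have -> : (Posz 0 - 1 = Negz 0) by [].
  by rewrite /= -(h 0%N).
- have -> : (Posz k.+1 - 1 = Posz k) by lia.
  by rewrite /= -(h k.+1).
- have -> : (Negz k - 1 = Negz k.+1) by lia.
  by rewrite /= mulr0 subr0.
Qed.

Lemma ext_rec1 (f g : nat -> F) a :
  (forall L, (if L is L'.+1 then f L' else 0) - a * f L = g L) ->
  forall J : int, ext f J - a * ext f (J + 1) = ext g (J + 1).
Proof.
move=> h [k|[|k]].
- have -> : (Posz k + 1 = Posz k.+1) by lia.
  by rewrite /= -(h k.+1).
- have -> : (Negz 0 + 1 = Posz 0) by [].
  by rewrite /= -(h 0%N).
- have -> : (Negz k.+1 + 1 = Negz k) by lia.
  by rewrite /= mulr0 subr0.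
Qed.

Lemma hz_rec m n (x : 'I_m.+1 -> F) (y : 'I_n -> F) (i0 : 'I_m.+1) k :
  hz x y k - x i0 * (if k is k'.+1 then hz x y k' else 0)
  = hz (fun i => x (lift i0 i)) y k.
Proof.
rewrite /hz.
set Y := \prod_(j < n) _.
pose P K := \prod_(i < m) Gp (x (lift i0 i)) K.
have eP K : \prod_(i < m.+1) Gp (x i) K = Gp (x i0) K * P K.
  by rewrite (bigD1_ord i0) //=.
pose Q := Y * (Gp (x i0) k * P k).
have -> : (if k is k'.+1 then (Y * \prod_(i < m.+1) Gp (x i) k')`_k' else 0)
        = (if k is k'.+1 then Q`_k' else 0).
  case: k @Q => // k Q; rewrite eP /Q; symmetry.
  have h : eqt k (P k.+1) (P k) by apply: eqt_prod => i; apply: eqt_Gp.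
  exact: (eqtM (@eqt_refl k Y) (eqtM (eqt_Gp _ (leqnSn k)) h) (leqnn k)).
rewrite eP -/Q -coef_1mX /Q.
have -> : (1 - (x i0)%:P * 'X) * (Y * (Gp (x i0) k * P k))
   = (Y * P k) * ((1 - (x i0)%:P * 'X) * Gp (x i0) k).
  ring.
have := @eqtM k (Y * P k) (Y * P k) _ _ (@eqt_refl k (Y * P k)) (@Gp_inv (x i0) k).
by move=> -> //; rewrite mulr1.
Qed.

Lemma hi_rec m n (x : 'I_m.+1 -> F) (y : 'I_n -> F) (i0 : 'I_m.+1) L :
  x i0 != 0 ->
  (if L is L'.+1 then hi x y L' else 0) - x i0 * hi x y L
  = hi (fun i => x (lift i0 i)) y L.
Proof.
move=> x0; rewrite /hi.
set Y := \prod_(j < n) _.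
pose P K := \prod_(i < m) Gi (x (lift i0 i)) K.
have eP K : \prod_(i < m.+1) Gi (x i) K = Gi (x i0) K * P K.
  by rewrite (bigD1_ord i0) //=.
pose Q := Y * (Gi (x i0) L * P L).
have -> : (if L is L'.+1 then (Y * \prod_(i < m.+1) Gi (x i) L')`_L' else 0)
        = (if L is L'.+1 then Q`_L' else 0).
  case: L @Q => // L Q; rewrite eP /Q; symmetry.
  have h : eqt L (P L.+1) (P L) by apply: eqt_prod => i; apply: eqt_Gi.
  exact: (eqtM (@eqt_refl L Y) (eqtM (eqt_Gi _ (leqnSn L)) h) (leqnn L)).
rewrite eP -/Q -coef_Xm /Q.
have -> : ('X - (x i0)%:P) * (Y * (Gi (x i0) L * P L))
   = (Y * P L) * (('X - (x i0)%:P) * Gi (x i0) L).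
  ring.
have := @eqtM L (Y * P L) (Y * P L) _ _ (@eqt_refl L (Y * P L)) (@Gi_inv (x i0) L x0).
by move=> -> //; rewrite mulr1.
Qed.

Lemma Hk_rec m n (x : 'I_m.+1 -> F) (y : 'I_n -> F) (i0 : 'I_m.+1) k :
  x i0 != 0 ->
  Hk x y k - x i0 * Hk x y (k - 1) = Hk (fun i => x (lift i0 i)) y k.
Proof.
move=> x0; rewrite !HkE.
set N := (n%:Z - (m.+1)%:Z - k).
have -> : n%:Z - (m.+1)%:Z - (k - 1) = N + 1 by rewrite /N; lia.
have -> : n%:Z - m%:Z - k = N + 1 by rewrite /N; lia.
rewrite -(ext_rec0 (hz_rec x y i0)) -(ext_rec1 (fun L => hi_rec y L x0)).
ring.
Qed.

Lemma ext_neg (f : nat -> F) L : (L < 0)%R -> ext f L = 0.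
Proof. by case: L => //= l; rewrite ltz_nat. Qed.

Lemma ext_eq (f g : nat -> F) k : f =1 g -> ext f k = ext g k.
Proof. by move=> h; case: k => //= k; rewrite h. Qed.

Lemma sum_sets n (y : 'I_n -> F) (g : nat -> {poly F}) :
  \sum_(J : {set 'I_n}) ((-1) ^+ #|J| * \prod_(i in J) y i) *: g #|J|
  = \sum_(j < n.+1) ((-1) ^+ j * elemsym y j) *: g j.
Proof.
rewrite (partition_big (fun J : {set 'I_n} => (inord #|J| : 'I_n.+1)) predT) //=.
apply: eq_bigr => j _; rewrite /elemsym mulr_sumr scaler_suml.
have hJ (J : {set 'I_n}) : (#|J| <= n)%N.
  by rewrite -[X in (_ <= X)%N](card_ord n) max_card.
apply: eq_big => J.
  by rewrite -(inj_eq val_inj) /= inordK ?ltnS.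
by move=> /eqP <-; rewrite inordK ?ltnS.
Qed.

Lemma prod1mX n (y : 'I_n -> F) :
  \prod_(j < n) (1 - (y j)%:P * 'X)
  = \sum_(j < n.+1) ((-1) ^+ j * elemsym y j) *: 'X^j.
Proof.
rewrite -(sum_sets y (fun j => 'X^j)).
under eq_bigr do rewrite addrC.
rewrite bigA_distr; apply: eq_bigr => J _.
rewrite -big_mkcond /=.
under eq_bigr do rewrite -mulNr -polyCN.
rewrite big_split /= prodr_const -rmorph_prod /= prodrN mul_polyC.
by [].
Qed.

Lemma prodXm n (y : 'I_n -> F) :
  \prod_(j < n) ('X - (y j)%:P)
  = \sum_(j < n.+1) ((-1) ^+ j * elemsym y j) *: 'X^(n - j).
Proof.
rewrite -(sum_sets y (fun j => 'X^(n - j))).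
rewrite bigA_distr (reindex_inj (@setC_inj _)) /=; apply: eq_bigr => J _.
rewrite (bigID (mem J)) /=.
rewrite (eq_bigr (fun i => - (y i)%:P)); last by move=> i hi; rewrite in_setC hi.
rewrite (eq_bigr (fun i => 'X)); last by move=> i hi; rewrite in_setC (negbTE hi).
rewrite prodr_const.
under eq_bigr do rewrite -polyCN.
rewrite -rmorph_prod /= prodrN mul_polyC mulrC; congr (_ *: 'X^_).
have h := cardC J; rewrite card_ord in h.
have h2 : #|(fun i : 'I_n => i \notin J)| = #|[predC J]|.
  by apply: eq_card => i; rewrite !inE.
by rewrite h2 -[X in _ = (X - _)%N]h addKn.
Qed.

Lemma coef_prod1mX n (y : 'I_n -> F) k :
  (\prod_(j < n) (1 - (y j)%:P * 'X))`_k
  = if (k <= n)%N then (-1) ^+ k * elemsym y k else 0.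
Proof.
by rewrite prod1mX -(poly_def _ (fun j => (-1) ^+ j * elemsym y j)) coef_poly ltnS.
Qed.

Lemma coef_prodXm n (y : 'I_n -> F) L :
  (\prod_(j < n) ('X - (y j)%:P))`_L
  = if (L <= n)%N then (-1) ^+ (n - L) * elemsym y (n - L) else 0.
Proof.
rewrite prodXm (reindex_inj rev_ord_inj) /=.
have -> : \sum_(j < n.+1) ((-1) ^+ (n.+1 - j.+1) * elemsym y (n.+1 - j.+1)) *:
      'X^(n - (n.+1 - j.+1))
    = \sum_(j < n.+1) ((-1) ^+ (n - j) * elemsym y (n - j)) *: 'X^j.
  apply: eq_bigr => j _; rewrite subSS subKn //; exact: (ltn_ord j).
by rewrite -(poly_def _ (fun j => (-1) ^+ (n - j) * elemsym y (n - j))) coef_poly ltnS.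
Qed.

Lemma Hk_m0 n (x : 'I_0 -> F) (y : 'I_n -> F) k : Hk x y k = 0.
Proof.
rewrite HkE /hz /hi.
have e1 l : ((\prod_(j < n) (1 - (y j)%:P * 'X)) * \prod_(i < 0) Gp (x i) l)`_l
   = if (l <= n)%N then (-1) ^+ l * elemsym y l else 0.
  by rewrite big_ord0 mulr1 coef_prod1mX.
have e2 l : ((\prod_(j < n) ('X - (y j)%:P)) * \prod_(i < 0) Gi (x i) l)`_l
   = if (l <= n)%N then (-1) ^+ (n - l) * elemsym y (n - l) else 0.
  by rewrite big_ord0 mulr1 coef_prodXm.
rewrite (ext_eq _ e1) (ext_eq _ e2).
case: k => [k|k] /=.
  case: (leqP k n) => h.
    have -> : n%:Z - 0%:Z - k%:Z = Posz (n - k) by lia.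
    by rewrite /= leq_subr subKn // ?h subrr.
  rewrite ext_neg ?subrr //; lia.
rewrite ifF ?subrr //; lia.
Qed.

Lemma conv (Y : {poly F}) n (Q : nat -> {poly F}) :
  (size Y <= n.+1)%N -> (forall K K', (K <= K')%N -> eqt K (Q K') (Q K)) ->
  forall L : int, ext (fun l => (Y * Q l)`_l) L
    = \sum_(i < n.+1) Y`_i * ext (fun l => (Q l)`_l) (L - (i : nat)%:Z).
Proof.
move=> hY hQ [l|l]; last first.
  rewrite /= big1 // => i _.
  by case E: (Negz l - _) => [a|a] /=; [lia | rewrite mulr0].
pose g (i : nat) := if (i <= l)%N then Y`_i * (Q (l - i)%N)`_(l - i)%N else 0.
have extE (i : nat) : ext (fun l => (Q l)`_l) (Posz l - Posz i)
    = if (i <= l)%N then (Q (l - i)%N)`_(l - i)%N else 0.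
  case E: (Posz l - _) => [a|a] /=; case: leqP => h //; try lia.
  by have -> : a = (l - i)%N%N by lia.
transitivity (\sum_(i < (l + n)%N.+1) g i).
  rewrite /= coefM (big_ord_widen (l + n)%N.+1 (fun i => Y`_i * (Q l)`_(l - i)%N)); last by lia.
  rewrite big_mkcond; apply: eq_bigr => i _; rewrite /g ltnS.
  case: ifP => // h; congr (_ * _); apply: hQ => //; exact: leq_subr.
symmetry.
under eq_bigr do rewrite extE.
rewrite (big_ord_widen (l + n)%N.+1 (fun i => Y`_i * (if (i <= l)%N then (Q (l - i)%N)`_(l - i)%N else 0))); last by lia.
rewrite big_mkcond; apply: eq_bigr => i _; rewrite /g.
case: ifP => h; first by case: ifP; rewrite ?mulr0.
by rewrite nth_default ?mul0r; [case: ifP | apply: leq_trans hY _; rewrite leqNgt h].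
Qed.

Lemma part1 m n (x : 'I_m -> F) (y : 'I_n -> F) k :
  Hk x y k = \sum_(j < n.+1) (-1) ^+ j * elemsym y j * Hk x (@noy F) (k - (j : nat)%:Z).
Proof.
under [RHS]eq_bigr do rewrite HkE mulrBr.
rewrite HkE sumrB.
pose Q l := \prod_(i < m) Gp (x i) l.
pose Q' l := \prod_(i < m) Gi (x i) l.
have hQ K K' : (K <= K')%N -> eqt K (Q K') (Q K).
  by move=> h; apply: eqt_prod => i; apply: eqt_Gp.
have hQ' K K' : (K <= K')%N -> eqt K (Q' K') (Q' K).
  by move=> h; apply: eqt_prod => i; apply: eqt_Gi.
have ez l : hz x (@noy F) l = (Q l)`_l by rewrite /hz big_ord0 mul1r.
have ei l : hi x (@noy F) l = (Q' l)`_l by rewrite /hi big_ord0 mul1r.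
have s1 : (size (\prod_(j < n) (1 - (y j)%:P * 'X))%R <= n.+1)%N.
  by rewrite prod1mX -(poly_def _ (fun j => (-1) ^+ j * elemsym y j)) size_poly.
have s2 : (size (\prod_(j < n) ('X - (y j)%:P))%R <= n.+1)%N.
  rewrite prodXm; apply: leq_trans (size_sum _ _ _) _; apply/bigmax_leqP => j _.
  apply: leq_trans (size_scale_leq _ _) _.
  by rewrite size_polyXn ltnS leq_subr.
congr (_ - _).
  rewrite /hz (conv s1 hQ); apply: eq_bigr => j _.
  by rewrite coef_prod1mX -ltnS ltn_ord (ext_eq _ ez).
rewrite /hi (conv s2 hQ') (reindex_inj rev_ord_inj) /=; apply: eq_bigr => j _.
have ei' l : ((\prod_(j < 0) ('X - (@noy F j)%:P)) * Q' l)`_l = (Q' l)`_l.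
  by rewrite big_ord0 mul1r.
have hj : (j <= n)%N by rewrite -ltnS.
rewrite coef_prodXm subSS leq_subr (subKn hj) (ext_eq _ ei').
congr (_ * ext _ _).
lia.
Qed.

Definition cc m n (x : 'I_m -> F) (y : 'I_n -> F) (l : 'I_m) : F :=
  (\prod_(j < n) (1 - y j / x l)) *
  (x l ^+ m.-1 / \prod_(l' < m | l' != l) (x l - x l')).
Definition Phi m n (x : 'I_m -> F) (y : 'I_n -> F) (k : int) : F :=
  \sum_(l < m) cc x y l * x l ^ k.

Lemma exprz_pred (a : F) k : a != 0 -> a ^ (k - 1) = a ^ k / a.
Proof. by move=> a0; rewrite expfzDr // exprN1. Qed.

Lemma diff_neq0 m (x : 'I_m -> F) : injective x ->
  forall l l', l' != l -> x l - x l' != 0.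
Proof.
move=> inj l l' h; rewrite subr_eq0; apply: contra h => /eqP e.
by apply/eqP; apply: inj.
Qed.

Lemma Phi_rec m n (x : 'I_m.+1 -> F) (y : 'I_n -> F) (i0 : 'I_m.+1) k :
  (forall i, x i != 0) -> injective x ->
  Phi x y k - x i0 * Phi x y (k - 1) = Phi (fun i => x (lift i0 i)) y k.
Proof.
move=> nz inj; rewrite /Phi mulr_sumr -sumrB (bigD1_ord i0) //=.
rewrite exprz_pred // [X in X + _ = _](_ : _ = 0); last by field; exact: nz.
rewrite add0r; apply: eq_bigr => l _; rewrite exprz_pred //.
rewrite /cc (bigD1_ord i0 (P := fun l' => l' != lift i0 l)) /=; last first.
  exact: neq_lift.
rewrite (eq_bigl (fun l' => l' != l)); last by move=> l'; rewrite (inj_eq (@lift_inj _ i0)).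
case: m x i0 inj nz l => [|m] x i0 inj nz l; first by case: l.
rewrite /= exprS.
have h1 : x (lift i0 l) - x i0 != 0 by apply: diff_neq0 => //; exact: neq_lift.
have h2 : \prod_(l' < m.+1 | l' != l) (x (lift i0 l) - x (lift i0 l')) != 0.
  apply/prodf_neq0 => l' hl; apply: diff_neq0 => //.
  by rewrite (inj_eq (@lift_inj _ i0)).
have h3 := nz (lift i0 l).
field.
by rewrite h1 h2 h3.
Qed.

Lemma Hk_noy_0 (x : 'I_1 -> F) : Hk x (@noy F) 0 = 1.
Proof.
rewrite HkE (@ext_neg (hi _ _)) // /= /hz big_ord0 mul1r big_ord1 coef_Gp /= expr0 subr0.
by [].
Qed.

Lemma P1_noy m (x : 'I_m -> F) : injective x -> (forall i, x i != 0) ->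
  forall k, Hk x (@noy F) k = Phi x (@noy F) k.
Proof.
elim: m x => [|m IH] x inj nz k.
  by rewrite Hk_m0 /Phi big_ord0.
pose D k := Hk x (@noy F) k - Phi x (@noy F) k.
have injl i0 : injective (fun i => x (lift i0 i)).
  by move=> a b /inj /lift_inj.
have hD i0 k' : D k' = x i0 * D (k' - 1).
  have := Hk_rec (@noy F) k' (nz i0); have := Phi_rec (@noy F) i0 k' nz inj.
  move=> e1 e2; rewrite (IH _ (injl i0)) in e2; last by move=> i; apply: nz.
  have h : (Hk x (@noy F) k' - x i0 * Hk x (@noy F) (k' - 1)) -
           (Phi x (@noy F) k' - x i0 * Phi x (@noy F) (k' - 1)) = 0.
    by rewrite e1 e2 subrr.
  rewrite /D; apply/eqP; rewrite -subr_eq0; apply/eqP; rewrite -h; ring.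
suff : D k = 0 by move/eqP; rewrite subr_eq0 => /eqP.
case: m IH x inj nz @D injl hD => [|m] IH x inj nz D injl hD.
  have D0 : D 0 = 0.
    rewrite /D Hk_noy_0 /Phi big_ord1 /cc big_ord0 mul1r /=.
    rewrite big_pred0 ?divr1 ?expr0 ?expr0z ?mulr1 ?subrr // => l; rewrite ord1 eqxx //=.
  case: k => [k|k].
    elim: k => [|k IHk] //; rewrite (hD ord0) (_ : _ - 1 = Posz k) ?IHk ?mulr0 //; lia.
  elim: k => [|k IHk].
    have := hD ord0 0; rewrite D0 => /esym /eqP; rewrite mulf_eq0 (negbTE (nz _)).
    by move/eqP.
  have := hD ord0 (Negz k); rewrite IHk => /esym /eqP; rewrite mulf_eq0 (negbTE (nz _)).
  by rewrite (_ : Negz k - 1 = Negz k.+1); [move/eqP | lia].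
have h01 : x ord0 - x (lift ord0 ord0) != 0.
  by apply: diff_neq0 => //.
have hk : D (k + 1 - 1) = 0.
  have e := hD ord0 (k + 1); rewrite (hD (lift ord0 ord0) (k + 1)) in e.
  have : (x ord0 - x (lift ord0 ord0)) * D (k + 1 - 1) = 0 by rewrite mulrBl e subrr.
  by move/eqP; rewrite mulf_eq0 (negbTE h01) /= => /eqP.
by have <- : k + 1 - 1 = k by lia.
Qed.

Lemma gexp n (y : 'I_n -> F) (z : F) : z != 0 ->
  \prod_(j < n) (1 - y j / z) = \sum_(j < n.+1) (-1) ^+ j * elemsym y j * z ^ (- (j : nat)%:Z).
Proof.
move=> z0; have e := congr1 (fun p => p.[z^-1]) (prod1mX y).
rewrite /= horner_prod horner_sum in e.
transitivity (\prod_(j < n) (1 - (y j)%:P * 'X).[z^-1]).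
  by apply: eq_bigr => j _; rewrite !hornerE.
rewrite e; apply: eq_bigr => j _.
by rewrite hornerZ hornerXn exprVn exprnN.
Qed.

Lemma P1 m n (x : 'I_m -> F) (y : 'I_n -> F) : injective x -> (forall i, x i != 0) ->
  forall k, Hk x y k = Phi x y k.
Proof.
move=> inj nz k; rewrite part1.
under eq_bigr do rewrite (P1_noy inj nz) /Phi mulr_sumr.
rewrite exchange_big /=; apply: eq_bigr => l _.
rewrite /cc big_ord0 mul1r (gexp _ (nz l)) !mulr_suml.
apply: eq_bigr => j _; rewrite (_ : k - (j : nat)%:Z = - (j : nat)%:Z + k); last by lia.
rewrite expfzDr //; ring.
Qed.

Definition Ssum (N : nat) (q : {poly F}) (H : int -> F) (k : int) : F :=
  \sum_(i < N) q`_i * H (k - (i : nat)%:Z).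

Lemma Ssum_step N (q : {poly F}) (a : F) H k : (size q <= N)%N ->
  Ssum N.+1 ((1 - a%:P * 'X) * q) H k = Ssum N q (fun k => H k - a * H (k - 1)) k.
Proof.
move=> hq; rewrite /Ssum.
under eq_bigr do rewrite coef_1mX mulrBl.
rewrite sumrB big_ord_recr /= (nth_default _ hq) mul0r addr0.
rewrite big_ord_recl /= mulr0 mul0r add0r -sumrB; apply: eq_bigr => i _.
rewrite add0n /bump leq0n add1n (_ : k - (i.+1 : nat)%:Z = k - (i : nat)%:Z - 1); last by lia.
ring.
Qed.

Lemma recur m (x : 'I_m -> F) n (y : 'I_n -> F) : (forall i, x i != 0) ->
  forall k, Ssum m.+1 (\prod_(i < m) (1 - (x i)%:P * 'X)) (Hk x y) k = 0.
Proof.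
elim: m x => [|m IH] x nz k.
  by rewrite /Ssum big_ord1 big_ord0 coef1 /= mul1r Hk_m0.
rewrite big_ord_recl Ssum_step; last first.
  by rewrite prod1mX -(poly_def _ (fun j => (-1) ^+ j * elemsym _ j)) size_poly.
rewrite -(IH (fun i => x (lift ord0 i)) (fun i => nz _) k).
by rewrite /Ssum; apply: eq_bigr => i _; rewrite Hk_rec.
Qed.

Lemma elemsym0 n (y : 'I_n -> F) : elemsym y 0 = 1.
Proof.
rewrite /elemsym (big_pred1 set0) ?big_set0 // => A.
by rewrite cards_eq0 inE.
Qed.

Lemma part6 m (x : 'I_m -> F) n (y : 'I_n -> F) : (forall i, x i != 0) ->
  forall lam : 'I_m.+1 -> int,
  \det (\matrix_(i < m.+1, j < m.+1) Hk x y (lam i - (i : nat)%:Z + (j : nat)%:Z)) = 0.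
Proof.
move=> nz lam; set M := \matrix_(i, j) _.
pose q := \prod_(i < m) (1 - (x i)%:P * 'X).
apply/eqP; rewrite -det_tr; apply/det0P.
exists (\row_(j < m.+1) q`_(m - j)).
  apply/eqP => /matrixP /(_ 0 ord_max); rewrite !mxE subnn.
  rewrite /q coef_prod1mX leq0n expr0 mul1r elemsym0 => /eqP.
  by rewrite oner_eq0.
apply/matrixP => i0 i; rewrite !mxE.
transitivity (Ssum m.+1 q (Hk x y) (lam i - (i : nat)%:Z + (m : nat)%:Z)); last exact: recur.
rewrite /Ssum (reindex_inj rev_ord_inj) /=; apply: eq_bigr => j _.
have hj : (j <= m)%N by rewrite -ltnS.
rewrite !mxE /= subSS (subKn hj).
congr (_ * Hk x y _).
have := ltn_ord j; lia.
Qed.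

Lemma pair_rev m (f : 'I_m -> 'I_m -> F) :
  \prod_(i < m) \prod_(j < m | (i < j)%N) f (rev_ord j) (rev_ord i)
  = \prod_(i < m) \prod_(j < m | (i < j)%N) f i j.
Proof.
under eq_bigr do rewrite big_mkcond.
rewrite exchange_big (reindex_inj rev_ord_inj) /=.
symmetry; under eq_bigr do rewrite big_mkcond.
apply: eq_bigr => i _; rewrite (reindex_inj rev_ord_inj) /=.
apply: eq_bigr => j _; rewrite !rev_ordK.
by have -> : (i < m - j.+1)%N = (j < m - i.+1)%N by apply/idP/idP => h; lia.
Qed.

Lemma vdm_desc m (z : 'I_m -> F) :
  \det (\matrix_(i < m, j < m) z j ^+ (m - 1 - i)) = Delta z.
Proof.
pose r : 'S_m := perm (@rev_ord_inj m).
pose V' := Vandermonde m (\row_j z (rev_ord j)).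
have -> : \matrix_(i < m, j < m) z j ^+ (m - 1 - i) = row_perm r (col_perm r V').
  apply/matrixP => i j; rewrite !mxE !permE rev_ordK /=.
  congr (_ ^+ _); lia.
rewrite row_permE col_permE !det_mulmx !det_perm odd_permV.
rewrite mulrCA -signr_addb addbb expr0 mulr1.
rewrite det_Vandermonde /Delta.
under eq_bigr do under eq_bigr do rewrite !mxE.
by rewrite (pair_rev (fun i j => z i - z j)).
Qed.

Lemma pairs m (x : 'I_m -> F) :
  \prod_(l < m) \prod_(l' < m | l' != l) (x l - x l')
  = Delta x * \prod_(i < m) \prod_(j < m | (i < j)%N) (x j - x i).
Proof.
rewrite /Delta -big_split /=.
transitivity (\prod_(l < m) (\prod_(l' < m | (l < l')%N) (x l - x l') *
                             \prod_(l' < m | (l' < l)%N) (x l - x l'))).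
  apply: eq_bigr => l _; rewrite (bigID (fun l' : 'I_m => (l < l')%N)) /=.
  congr (_ * _); apply: eq_bigl => l'; rewrite -(inj_eq val_inj) /=.
    by case: ltngtP.
  by case: ltngtP.
rewrite !big_split /=; congr (_ * _).
under eq_bigr do rewrite big_mkcond.
rewrite exchange_big /=; apply: eq_bigr => i _.
by rewrite [RHS]big_mkcond.
Qed.

Lemma Delta_neq0 m (x : 'I_m -> F) : injective x -> Delta x != 0.
Proof.
move=> inj; apply/prodf_neq0 => i _; apply/prodf_neq0 => j hij.
apply: diff_neq0 => //; rewrite -(inj_eq val_inj) /=.
by rewrite neq_ltn hij orbT.
Qed.

Lemma Delta0 m (x : 'I_m -> F) a b : a != b -> x a = x b -> Delta x = 0.
Proof.
wlog hab : a b / (a < b)%N.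
  move=> H ne e; case: (ltngtP a b) => h; first exact: (H a b).
    by apply: (H b a) => //; rewrite eq_sym.
  by move: ne; rewrite -(inj_eq val_inj) /= h eqxx.
move=> _ e; apply/eqP; apply/prodf_eq0; exists a => //.
apply/prodf_eq0; exists b => //.
by rewrite e subrr.
Qed.

Lemma part5 m n (x : 'I_m -> F) (y : 'I_n -> F) : (forall i, x i != 0) ->
  injective x -> forall lam : 'I_m -> int,
  \det (\matrix_(i < m, j < m) Hk x y (lam i - (i : nat)%:Z + (j : nat)%:Z))
  = (\prod_(i < m) \prod_(j < n) (1 - y j / x i)) * Elam lam x.
Proof.
move=> nz inj lam.
pose A0 := \matrix_(i < m, l < m) x l ^ (lam i - (i : nat)%:Z).
pose B := (Vandermonde m (\row_l x l))^T.
have eM : \matrix_(i < m, j < m) Hk x y (lam i - (i : nat)%:Z + (j : nat)%:Z)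
    = A0 *m diag_mx (\row_l cc x y l) *m B.
  rewrite mul_mx_diag; apply/matrixP => i j; rewrite !mxE (P1 y inj nz) /Phi.
  apply: eq_bigr => l _; rewrite !mxE expfzDr //.
  have -> : x l ^ (Posz j) = x l ^+ j by [].
  ring.
have eA : \det A0 * \prod_l x l ^+ m.-1 = alt lam x.
  have := det_mulmx A0 (diag_mx (\row_l x l ^+ m.-1)); rewrite det_diag.
  under eq_bigr do rewrite mxE.
  move=> <-; rewrite mul_mx_diag /alt; apply: eq_bigr => s _; congr (_ * _).
  apply: eq_bigr => i _; rewrite !mxE.
  have -> : x (s i) ^+ m.-1 = x (s i) ^ (Posz m.-1) by [].
  rewrite -expfzDr //; congr (_ ^ _).
  have := ltn_ord i; lia.
have hV : \prod_(i < m) \prod_(j < m | (i < j)%N) (x j - x i) != 0.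
  apply/prodf_neq0 => i _; apply/prodf_neq0 => j hij.
  apply: diff_neq0 => //; rewrite -(inj_eq val_inj) /=.
  by rewrite neq_ltn hij.
have hD := Delta_neq0 inj.
rewrite eM !det_mulmx det_diag det_tr det_Vandermonde.
under [X in _ * X]eq_bigr do under eq_bigr do rewrite !mxE.
under eq_bigr do rewrite mxE.
rewrite /cc big_split /= prodf_div pairs /Elam -eA.
field.
by rewrite hD hV.
Qed.

Lemma lagrange m (x : 'I_m -> F) : injective x -> (forall i, x i != 0) ->
  forall p, (p < m)%N ->
  \sum_(j < m) x j ^+ p / \prod_(l < m | l != j) (x j - x l) = (p == m.-1)%:R.
Proof.
move=> inj nz p hp.
have := P1_noy inj nz (Posz p - Posz m.-1).
rewrite HkE (@ext_neg (hi _ _)); last by lia.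
rewrite /Phi => e.
transitivity (ext (hz x (@noy F)) (Posz p - Posz m.-1) - 0).
  rewrite e; apply: eq_bigr => j _; rewrite /cc big_ord0 mul1r.
  have -> : x j ^+ p = x j ^ (Posz m.-1 + (Posz p - Posz m.-1)).
    by rewrite (_ : x j ^+ p = x j ^ (Posz p)) //; congr (_ ^ _); lia.
  rewrite expfzDr //; have -> : x j ^ (Posz m.-1) = x j ^+ m.-1 by [].
  ring.
rewrite subr0; case: eqP => h.
  have -> : Posz p - Posz m.-1 = Posz 0 by lia.
  rewrite /= /hz big_ord0 mul1r coef0_prod big1 // => i _.
  by rewrite coef_Gp /= expr0.
by rewrite ext_neg //; lia.
Qed.


Definition Ak m (i0 : 'I_m) (g : F -> F) (k : int) (x : 'I_m -> F) : 'M[F]_m :=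
  \matrix_(i < m, j < m) ((if i == i0 then g (x j) * x j ^ k else 1) * x j ^+ (m - 1 - i)).

Lemma detAk m (i0 : 'I_m) g k (x : 'I_m -> F) :
  \det (Ak i0 g k x) = \sum_(s : 'S_m) (-1) ^+ s *
     (g (x (s i0)) * x (s i0) ^ k * \prod_(i < m) x (s i) ^+ (m - 1 - i)).
Proof.
apply: eq_bigr => s _; congr (_ * _).
under eq_bigr do rewrite mxE.
by rewrite big_split /= -big_mkcond big_pred1_eq.
Qed.


Lemma key2 m n (x : 'I_m -> F) (y : 'I_n -> F) (i0 : 'I_m) k :
  (i0 : nat) = 0%N -> (forall i, x i != 0) ->
  Hk x y k * Delta x = \det (Ak i0 (fun z => \prod_(j < n) (1 - y j / z)) k x).
Proof.
move=> hi0 nz; set g := fun z => _.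
have [inj | ninj] := boolP (injectiveb x); last first.
  case/injectivePn: ninj => a [b ne e].
  rewrite (Delta0 ne e) mulr0 -det_tr.
  rewrite (determinant_alternate ne) // => j.
  by rewrite !mxE e.
move/injectiveP: inj => inj.
pose V := \matrix_(i < m, j < m) x j ^+ (m - 1 - i).
pose u := \col_(j < m) (Delta x / \prod_(l < m | l != j) (x j - x l)).
have hD := Delta_neq0 inj.
have uV : V \in unitmx by rewrite unitmxE unitfE vdm_desc.
have hcol : col i0 (\adj V) = u.
  have e1 : V *m col i0 (\adj V) = V *m u.
    rewrite colE mulmxA mul_mx_adj vdm_desc mul_scalar_mx.
    apply/matrixP => a b; rewrite !mxE ord1 eqxx andbT.
    under eq_bigr do rewrite !mxE.
    transitivity (Delta x * \sum_(j < m) x j ^+ (m - 1 - a) / \prod_(l < m | l != j) (x j - x l)).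
      rewrite lagrange //; last by have := ltn_ord a; lia.
      congr (_ * _%:R); rewrite -(inj_eq val_inj) /= hi0.
      by apply/eqP/eqP; have := ltn_ord a; lia.
    by rewrite mulr_sumr; apply: eq_bigr => j _; ring.
  by rewrite -(mulKmx uV (col i0 (\adj V))) e1 mulKmx.
rewrite (P1 y inj nz) /Phi mulr_suml (expand_det_row _ i0).
apply: eq_bigr => j _.
have -> : cofactor (Ak i0 g k x) i0 j = cofactor V i0 j.
  rewrite /cofactor; congr (_ * \det _); apply/matrixP => a b; rewrite !mxE.
  by rewrite eq_sym (negbTE (neq_lift _ _)) mul1r.
have -> : cofactor V i0 j = u j 0 by rewrite -hcol !mxE.
rewrite !mxE eqxx hi0 /cc /g subn0 subn1.
set G := \prod_(j0 < n) _; set P := \prod_(l < m | l != j) _.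
set a := x j ^ k; set b := x j ^+ m.-1; set D := Delta x.
rewrite /P; set P' := \prod_(l < m | l != j) _.
ring.
Qed.

Lemma part2 m n (x : 'I_m -> F) (y : 'I_n -> F) (i0 : 'I_m) k :
  (i0 : nat) = 0%N -> (forall i, x i != 0) ->
  Hk x y k * Delta x * Delta y =
  \sum_(s : 'S_m) \sum_(t : 'S_n)
     (-1) ^+ s * (-1) ^+ t * term2 i0 k (fun i => x (s i)) (fun j => y (t j)).
Proof.
move=> hi0 nz; rewrite (key2 y k hi0 nz) detAk -(vdm_desc y).
rewrite [\det _]/determinant mulr_suml; apply: eq_bigr => s _.
rewrite mulr_sumr; apply: eq_bigr => t _.
under eq_bigr do rewrite mxE.
rewrite /term2.
have -> : \prod_(j < n) (1 - y j / x (s i0)) = \prod_(j < n) (1 - y (t j) / x (s i0)).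
  by rewrite (reindex_inj (@perm_inj _ t)).
set G := \prod_(j < n) _; set X1 := \prod_(i < m) _; set Y1 := \prod_(i < n) _.
set a := x (s i0) ^ k; set e1 := (-1) ^+ s; set e2 := (-1) ^+ t.
ring.
Qed.

End Work.


Theorem mainTheorem7 (F : fieldType) (m n : nat)
    (x : 'I_m -> F) (y : 'I_n -> F) (hx : forall i, x i != 0) :
  (* (1) *)
  (forall k : int,
     Hk x y k = \sum_(j < n.+1) (-1) ^+ j * elemsym y j * Hk x (@noy F) (k - (j : nat)%:Z))
  (* (2) (m >= 1; i0 is x_1) *)
  /\ (forall i0 : 'I_m, (i0 : nat) = 0%N -> forall k : int,
        Hk x y k * Delta x * Delta y =
        \sum_(s : 'S_m) \sum_(t : 'S_n)
           (-1) ^+ s * (-1) ^+ t * term2 i0 k (fun i => x (s i)) (fun j => y (t j)))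
  (* (3) *)
  /\ (forall i0 : 'I_m, (i0 : nat) = 0%N -> forall k : int,
        Hk x y k - x i0 * Hk x y (k - 1) = Hk (xtail x) y k)
  (* (4) *)
  /\ (m = 1%N -> forall i0 : 'I_m, forall k : int,
        Hk x y k - x i0 * Hk x y (k - 1) = 0)
  (* (5) *)
  /\ (injective x -> forall lam : 'I_m -> int,
        \det (\matrix_(i < m, j < m) Hk x y (lam i - (i : nat)%:Z + (j : nat)%:Z))
        = (\prod_(i < m) \prod_(j < n) (1 - y j / x i)) * Elam lam x)
  (* (6) *)
  /\ (forall lam : 'I_m.+1 -> int,
        \det (\matrix_(i < m.+1, j < m.+1) Hk x y (lam i - (i : nat)%:Z + (j : nat)%:Z))
        = 0).
Proof.
split; first by move=> k; exact: part1.
split.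
  by move=> i0 hi0 k; exact: (part2 y k hi0 hx).
split.
  case: m x hx => [|m] x hx i0 hi0 k; first by have := ltn_ord i0; rewrite ltn0.
  have e : i0 = ord0 by apply: val_inj.
  clear hi0; subst i0.
  exact: (Hk_rec y k (hx ord0)).
split.
  move=> e; subst m => i0 k.
  by rewrite (Hk_rec y k (hx i0)) Hk_m0.
split.
  by move=> inj lam; exact: part5.
by move=> lam; exact: part6.
Qed.
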